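(* For integers $\lambda_1\ge\lambda_2\ge0$: $F_{(\lambda_1)}(q)=[2]^{\lambda_1}$ and $F_{(\lambda_1,\lambda_2)}(q)=-q^{-1}[2]^{\lambda_1}+q^{-1}[2]^{\lambda_1-\lambda_2+1}[3]^{\lambda_2}$.
   Context: $[m]=1+q+\dots+q^{m-1}$. For a partition $\lambda=(\lambda_1\ge\dots\ge\lambda_k\ge0)$, the Young diagram $Y_\lambda$ has $\lambda_i$ left-justified boxes in row $i$ (row 1 on top). A $\hbox{Le}$-filling of $Y_\lambda$ is a map $D:Y_\lambda\to\{0,1\}$ such that no box filled with $0$ has a box filled with $1$ somewhere above it in the same column and a box filled with $1$ somewhere to its left in the same row. $F_\lambda(q)=\sum_D q^{\#\{\text{boxes with }D=1\}}$ over all $\hbox{Le}$-fillings of $Y_\lambda$. *)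

(* Defs.v *)
From HB Require Import structures.
From mathcomp Require Import all_boot all_order all_algebra.
Set Implicit Arguments. Unset Strict Implicit. Unset Printing Implicit Defensive.
Import GRing.Theory.
Local Open Scope ring_scope.

(* A partition is given as a weakly decreasing list of row lengths
   lam = [:: lam_1; ...; lam_k]; row i (0-based, top row = 0) has lam_i
   left-justified boxes.  Box (i, j) = row i, column j (both 0-based). *)
Definition box_in (lam : seq nat) (i j : nat) : bool :=
  (i < size lam)%N && (j < nth 0%N lam i)%N.

Definition ncols (lam : seq nat) : nat := foldr maxn 0%N lam.

(* fillings are {0,1}-valued functions on the bounding rectangle that
   vanish outside Y_lam (true = 1, false = 0) *)
Definition filling (lam : seq nat) :=
  {ffun 'I_(size lam) * 'I_(ncols lam) -> bool}.

Definition is_Le (lam : seq nat) (D : filling lam) : bool :=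
  [forall b : 'I_(size lam) * 'I_(ncols lam), D b ==> box_in lam b.1 b.2] &&
  [forall b : 'I_(size lam) * 'I_(ncols lam), (box_in lam b.1 b.2 && ~~ D b) ==>
     ~~ ([exists i : 'I_(size lam), ((i < b.1)%N && D (i, b.2))] &&
         [exists j : 'I_(ncols lam), ((j < b.2)%N && D (b.1, j))])].

Definition weight (lam : seq nat) (D : filling lam) : nat := #|[pred b | D b]|.

Definition F_Le (R : comRingType) (lam : seq nat) (q : R) : R :=
  \sum_(D : filling lam | is_Le D) q ^+ weight D.

Definition qint (R : comRingType) (q : R) (m : nat) : R :=
  \sum_(i < m) q ^+ i.

(* Main.v *)
Require Import Defs.
From HB Require Import structures.
From mathcomp Require Import all_boot all_order all_algebra.
From mathcomp Require Import ring.
Import GRing.Theory.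
Local Open Scope ring_scope.

Definition fcons {X : finType} {n} (x : X) (f : {ffun 'I_n -> X}) : {ffun 'I_n.+1 -> X} :=
  [ffun i : 'I_n.+1 => if unlift ord0 i is Some j then f j else x].

Lemma fcons0 (X : finType) n (x : X) (f : {ffun 'I_n -> X}) : fcons x f ord0 = x.
Proof. by rewrite ffunE unlift_none. Qed.

Lemma fconsS (X : finType) n (x : X) (f : {ffun 'I_n -> X}) j : fcons x f (lift ord0 j) = f j.
Proof. by rewrite ffunE liftK. Qed.

Lemma sum_ffunS (R : comNzRingType) (X : finType) n (F : {ffun 'I_n.+1 -> X} -> R) :
  \sum_g F g = \sum_x \sum_(f : {ffun 'I_n -> X}) F (fcons x f).
Proof.
rewrite pair_bigA /=.
rewrite (reindex (fun p : X * {ffun 'I_n -> X} => fcons p.1 p.2)) //.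
exists (fun g : {ffun 'I_n.+1 -> X} => (g ord0, [ffun j => g (lift ord0 j)])).
  by move=> [x f] _ /=; rewrite fcons0; congr pair; apply/ffunP => j; rewrite ffunE fconsS.
move=> g _ /=; apply/ffunP => i; rewrite ffunE.
by case: unliftP => [j ->|->]; rewrite ?ffunE.
Qed.

Lemma forall_ordS n (P : pred 'I_n.+1) :
  [forall i, P i] = P ord0 && [forall i : 'I_n, P (lift ord0 i)].
Proof.
apply/forallP/andP => [H|[H0 /forallP H] i]; first by split => //; apply/forallP.
by case: (unliftP ord0 i) => [j ->|->].
Qed.

Lemma exists_ordS n (P : pred 'I_n.+1) :
  [exists i, P i] = P ord0 || [exists i : 'I_n, P (lift ord0 i)].
Proof.
apply/existsP/orP => [[i]|[H0|/existsP[j Hj]]]; last 2 first.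
- by exists ord0.
- by exists (lift ord0 j).
by case: (unliftP ord0 i) => [j ->|->] H; [right; apply/existsP; exists j|left].
Qed.

Definition valid {n} (l1 l2 : nat) (s : bool) (c : {ffun 'I_n -> bool * bool}) : bool :=
  [forall j : 'I_n, [&& (c j).1 ==> (j < l1)%N, (c j).2 ==> (j < l2)%N &
     ((j < l2)%N && (c j).1 && ~~ (c j).2) ==>
        ~~ (s || [exists j' : 'I_n, (j' < j)%N && (c j').2])]].

Definition loc (l1 l2 : nat) (s : bool) (x : bool * bool) : bool :=
  [&& x.1 ==> (0 < l1)%N, x.2 ==> (0 < l2)%N & ((0 < l2)%N && x.1 && ~~ x.2) ==> ~~ s].

Lemma valid_fcons n l1 l2 s x (f : {ffun 'I_n -> bool * bool}) :
  valid l1 l2 s (fcons x f) = loc l1 l2 s x && valid l1.-1 l2.-1 (s || x.2) f.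
Proof.
rewrite /valid forall_ordS fcons0; congr andb.
  have -> : [exists j' : 'I_n.+1, (j' < @ord0 n)%N && (fcons x f j').2] = false.
    by apply/existsP => [[j']]; rewrite ltn0.
  by rewrite orbF.
apply: eq_forallb => j; rewrite fconsS exists_ordS fcons0 lift0 /= !ltn_predRL.
congr [&& _, _ & _ ==> ~~ _]; rewrite orbA; congr orb.
apply: eq_existsb => j'; rewrite fconsS.
by rewrite /bump leq0n ltnS.
Qed.

Definition wc {R : comNzRingType} (q : R) {n} (c : {ffun 'I_n -> bool * bool}) : R :=
  \prod_j (q ^+ (c j).1 * q ^+ (c j).2).

Definition S {R : comNzRingType} (q : R) n l1 l2 s : R :=
  \sum_(c : {ffun 'I_n -> bool * bool} | valid l1 l2 s c) wc q c.

Lemma S_rec (R : comNzRingType) (q : R) n l1 l2 s :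
  S q n.+1 l1 l2 s = \sum_(x | loc l1 l2 s x) q ^+ x.1 * q ^+ x.2 * S q n l1.-1 l2.-1 (s || x.2).
Proof.
rewrite /S big_mkcond sum_ffunS /= [RHS]big_mkcond /=; apply: eq_bigr => x _.
under eq_bigr => f _ do rewrite valid_fcons.
case: (loc l1 l2 s x) => /=; last by rewrite big1.
rewrite big_distrr /= [RHS]big_mkcond /=; apply: eq_bigr => f _.
case: (valid _ _ _ f) => /=; last by rewrite ?mulr0.
by rewrite /wc big_ord_recl fcons0; congr (_ * _); apply: eq_bigr => j _; rewrite fconsS.
Qed.

Lemma sum4 (R : comNzRingType) (F : bool * bool -> R) :
  \sum_x F x = F (true, true) + F (true, false) + (F (false, true) + F (false, false)).
Proof.
transitivity (\sum_a \sum_b F (a, b)); last by rewrite !big_bool.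
by rewrite pair_bigA; apply: eq_bigr => -[].
Qed.

Lemma S0 (R : comNzRingType) (q : R) s : S q 0 0 0 s = 1.
Proof.
rewrite /S (big_pred1 [ffun i : 'I_0 => (false, false)]).
  by rewrite /wc big_ord0.
move=> g /=; apply/idP/eqP => [_|_].
  by apply/ffunP => -[].
by apply/forallP => -[].
Qed.

Lemma S_closed (R : comNzRingType) (q : R) n : forall l1 l2, (l2 <= l1 <= n)%N ->
  S q n l1 l2 true = (1 + q) ^+ (l1 - l2) * (1 + q + q ^+ 2) ^+ l2 /\
  q * S q n l1 l2 false = - (1 + q) ^+ l1 + (1 + q) ^+ (l1 - l2 + 1) * (1 + q + q ^+ 2) ^+ l2.
Proof.
elim: n => [|n IH] l1 l2.
  rewrite leqn0 => /andP[h21 /eqP h1]; subst l1; move: h21; rewrite leqn0 => /eqP ->.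
  by rewrite !S0 /=; split; ring.
move=> /andP[h21 h1n].
case: l2 h21 => [|l2] h21; case: l1 h21 h1n => [|l1] h21 h1n //.
- have [IHt IHf] := IH 0%N 0%N isT.
  split; rewrite S_rec big_mkcond sum4 /loc /=.
    by rewrite IHt /=; ring.
  transitivity (q * S q n 0 0 false); first ring.
  by rewrite IHf /=; ring.
- have [IHt IHf] := IH l1 0%N h1n.
  split; rewrite S_rec big_mkcond sum4 /loc /=.
    by rewrite IHt !subn0 (exprS (1 + q) l1); ring.
  transitivity ((1 + q) * (q * S q n l1 0 false)); first ring.
  by rewrite IHf !subn0 !addn1 !exprS; ring.
- have [IHt IHf] := IH l1 l2 (andb_true_intro (conj h21 h1n)).
  split; rewrite S_rec big_mkcond sum4 /loc /=.
    by rewrite IHt subSS (exprS (1 + q + q ^+ 2) l2); ring.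
  transitivity ((1 + q) * (q * S q n l1 l2 false) + q * q * (1 + q) * S q n l1 l2 true); first ring.
  by rewrite IHf IHt subSS !addn1 !exprS; ring.
Qed.

Lemma forall_pair (A B : finType) (P : pred (A * B)) :
  [forall b, P b] = [forall i, [forall j, P (i, j)]].
Proof.
apply/forallP/forallP => H; first by move=> i; apply/forallP => j; exact: H (i, j).
by move=> [i j]; exact: (forallP (H i) j).
Qed.

Lemma forall_ord0 (P : pred 'I_0) : [forall i, P i] = true.
Proof. by apply/forallP => -[]. Qed.

Lemma exists_ord0 (P : pred 'I_0) : [exists i, P i] = false.
Proof. by apply/existsP => -[[]]. Qed.

Lemma forall_andb (A : finType) (P Q : pred A) :
  [forall j, P j] && [forall j, Q j] = [forall j, P j && Q j].
Proof.
apply/andP/forallP => [[/forallP H1 /forallP H2] j|H]; first by rewrite H1 H2.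
by split; apply/forallP => j; case/andP: (H j).
Qed.

Section Two.
Variables (l1 l2 : nat).
Let lam := [:: l1; l2].
Let n := ncols lam.

Definition phi (c : {ffun 'I_n -> bool * bool}) : filling lam :=
  [ffun b : 'I_2 * 'I_n => if (b.1 : nat) == 0%N then (c b.2).1 else (c b.2).2].

Lemma phi_Le c : is_Le (phi c) = valid l1 l2 false c.
Proof.
rewrite /is_Le /valid !forall_pair /= !forall_ordS !forall_ord0 !andbT !forall_andb.
apply: eq_forallb => j /=.
have -> : [exists i : 'I_2, false] = false by apply/existsP => -[].
rewrite exists_ordS exists_ordS exists_ord0 /box_in /bump /= !ffunE /=.
have -> : [exists j0 : 'I_n, (j0 < j)%N && phi c (lift ord0 ord0, j0)] =
          [exists j' : 'I_n, (j' < j)%N && (c j').2].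
  by apply: eq_existsb => j0; rewrite ffunE.
case: (c j) => [[] []] /=; case: (j < l1)%N; case: (j < l2)%N => //=.
Qed.

Definition psi (D : filling lam) : {ffun 'I_n -> bool * bool} :=
  [ffun j => (D (ord0, j), D (ord_max, j))].

Lemma phi_weight (R : comNzRingType) (q : R) c : q ^+ weight (phi c) = wc q c.
Proof.
have -> : weight (phi c) = (\sum_j ((c j).1 + (c j).2))%N.
  rewrite /weight -sum1_card big_mkcond /=.
  transitivity (\sum_(b : 'I_2 * 'I_n) (phi c b : nat))%N.
    by apply: eq_bigr => b _; rewrite inE; case: (phi c b).
  transitivity (\sum_(i : 'I_2) \sum_(j : 'I_n) (phi c (i, j) : nat))%N.
    by rewrite pair_bigA; apply: eq_bigr => -[].
  rewrite exchange_big /=.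
  apply: eq_bigr => j _; rewrite !big_ord_recl big_ord0 !ffunE /=.
  by rewrite addn0.
rewrite (big_morph (fun k => q ^+ k) (exprD q) (expr0 q)).
by apply: eq_bigr => j _; rewrite exprD.
Qed.

Lemma F2 (R : comNzRingType) (q : R) : F_Le lam q = S q n l1 l2 false.
Proof.
rewrite /F_Le /S (reindex phi) /=.
  by apply: eq_big => c; [rewrite phi_Le | rewrite phi_weight].
exists psi.
  by move=> c _; apply/ffunP => j; rewrite !ffunE /=; case: (c j).
move=> D _; apply/ffunP => -[i j]; rewrite !ffunE /=.
case: i => [[|[|k]] Hi] //=.
  by congr (D (_, j)); apply: val_inj.
by congr (D (_, j)); apply: val_inj.
Qed.
End Two.

Section One.
Variables (l1 : nat).
Let lam := [:: l1].
Let n := ncols lam.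

Definition h1 (D : filling lam) : {ffun 'I_n -> bool * bool} :=
  [ffun j => (D (ord0, j), false)].

Lemma h1_Le D : is_Le D = valid l1 0 true (h1 D).
Proof.
rewrite /is_Le /valid !forall_pair /= !forall_ordS !forall_ord0 !andbT !forall_andb.
apply: eq_forallb => j /=.
rewrite !ffunE /= exists_ordS exists_ord0 /box_in /=.
by rewrite implybT.
Qed.

Lemma h1_weight (R : comNzRingType) (q : R) D : q ^+ weight D = wc q (h1 D).
Proof.
have -> : weight D = (\sum_j (D (ord0, j) : nat))%N.
  rewrite /weight -sum1_card big_mkcond /=.
  transitivity (\sum_(b : 'I_1 * 'I_n) (D b : nat))%N.
    by apply: eq_bigr => b _; rewrite inE; case: (D b).
  transitivity (\sum_(i : 'I_1) \sum_(j : 'I_n) (D (i, j) : nat))%N.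
    by rewrite pair_bigA; apply: eq_bigr => -[].
  by rewrite big_ord_recl big_ord0 addn0.
rewrite (big_morph (fun k => q ^+ k) (exprD q) (expr0 q)).
by apply: eq_bigr => j _; rewrite ffunE /= mulr1.
Qed.

Lemma F1 (R : comNzRingType) (q : R) : F_Le lam q = S q n l1 0 true.
Proof.
rewrite /F_Le /S [RHS](reindex h1) /=.
  by apply: eq_big => D; [rewrite h1_Le | rewrite h1_weight].
exists (fun c : {ffun 'I_n -> bool * bool} => [ffun b : 'I_1 * 'I_n => (c b.2).1] : filling lam).
  move=> D _; apply/ffunP => -[i j]; rewrite !ffunE /=.
  by case: i => [[|k] Hi] //; congr (D (_, j)); apply: val_inj.
move=> c; rewrite inE => /forallP Hc; apply/ffunP => j; rewrite !ffunE /=.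
move: (Hc j); case: (c j) => a [] //=.
by rewrite andbF.
Qed.
End One.

Lemma qint2 (R : comNzRingType) (q : R) : qint q 2 = 1 + q.
Proof. by rewrite /qint !big_ord_recr big_ord0 /= add0r expr0 expr1. Qed.

Lemma qint3 (R : comNzRingType) (q : R) : qint q 3 = 1 + q + q ^+ 2.
Proof. by rewrite /qint !big_ord_recr big_ord0 /= add0r expr0 expr1. Qed.

Theorem mainTheorem3 (R : fieldType) (q : R) (hq : q != 0)
    (l1 l2 : nat) (hl : (l2 <= l1)%N) :
  F_Le [:: l1] q = qint q 2 ^+ l1 /\
  F_Le [:: l1; l2] q =
    - q^-1 * qint q 2 ^+ l1
    + q^-1 * qint q 2 ^+ (l1 - l2 + 1) * qint q 3 ^+ l2.
Proof.
rewrite qint2 qint3; split.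
  rewrite F1.
  have [-> _] := @S_closed R q (ncols [:: l1]) l1 0%N (leq_maxl l1 0).
  by rewrite subn0 expr0 mulr1.
rewrite F2.
have h : (l2 <= l1 <= ncols [:: l1; l2])%N by rewrite hl leq_maxl.
have [_ E] := @S_closed R q (ncols [:: l1; l2]) l1 l2 h.
by rewrite -[LHS](mulKf hq) E; ring.
Qed.
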